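(* Let $\{\mathcal{C}_1,\mathcal{C}_2,\mathcal{C}_3\}$ be an unextendible set of three pairwise disjoint maximal commuting classes of two-qubit Pauli operators ($d=4$). Then the nine operators in $\mathcal{C}_1\cup\mathcal{C}_2\cup\mathcal{C}_3$ can be partitioned into a different set of three maximal commuting classes $\{\mathcal{C}_1',\mathcal{C}_2',\mathcal{C}_3'\}$ such that each $\mathcal{C}_i'$ contains exactly one operator from each of $\mathcal{C}_1$, $\mathcal{C}_2$, and $\mathcal{C}_3$.
   Context: Two-qubit Pauli operators are the tensor products $P_1\otimes P_2$ with $P_k\in\{I,X,Y,Z\}$; products are taken up to a phase. A maximal commuting class in $d=4$ is a set of $3$ mutually commuting non-identity two-qubit Pauli operators. A set of pairwise disjoint maximal commuting classes $\{\mathcal{C}_1,\dots,\mathcal{C}_L\}$ is unextendible if no further maximal commuting class can be formed from the non-identity Pauli operators not in $\mathcal{C}_1\cup\dots\cup\mathcal{C}_L$. *)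

(* Defs.v *)
From mathcomp Require Import all_boot.
Set Implicit Arguments. Unset Strict Implicit. Unset Printing Implicit Defensive.

(* Single-qubit Pauli operators up to phase: 0 = I, 1 = X, 2 = Y, 3 = Z. *)
Definition pauli1 := 'I_4.
Definition pauli2 := (pauli1 * pauli1)%type.

Definition pauliI : pauli2 := (ord0, ord0).

Definition anticomm1 (a b : pauli1) : bool :=
  [&& a != ord0, b != ord0 & a != b].

(* Tensor products commute iff the number of anticommuting factors is even. *)
Definition commute2 (p q : pauli2) : bool :=
  anticomm1 p.1 q.1 == anticomm1 p.2 q.2.

Definition max_comm_class (C : {set pauli2}) : bool :=
  [&& #|C| == 3, pauliI \notin C &
      [forall p in C, forall q in C, commute2 p q]].

Definition unextendible (S : {set {set pauli2}}) : bool :=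
  [&& [forall C in S, max_comm_class C],
      trivIset S &
      ~~ [exists C : {set pauli2},
            max_comm_class C && [disjoint C & cover S]]].

(* Main.v *)
Require Import Defs.
From mathcomp Require Import all_boot.
Set Implicit Arguments. Unset Strict Implicit. Unset Printing Implicit Defensive.

Definition O4 : seq 'I_4 := [:: @Ordinal 4 0 isT; @Ordinal 4 1 isT; @Ordinal 4 2 isT; @Ordinal 4 3 isT].
Definition P : seq pauli2 := flatten (map (fun i => map (fun j => (i,j)) O4) O4).
Definition good (s : seq pauli2) : bool :=
  [&& size s == 3, uniq s, pauliI \notin s & all (fun p => all (commute2 p) s) s].
Definition codep (p : pauli2) : nat := 4 * p.1 + p.2.
Definition Lc : seq (seq pauli2) :=
  filter (fun s => good s && sorted (fun p q => codep p < codep q) s)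
    (flatten (map (fun a => flatten (map (fun b => map (fun c => [:: a; b; c]) P) P)) P)).

Fixpoint lhas T (a : T -> bool) (s : seq T) : bool :=
  if s is x :: s' then (if a x then true else lhas a s') else false.
Fixpoint lall T (a : T -> bool) (s : seq T) : bool :=
  if s is x :: s' then (if a x then lall a s' else false) else true.
Definition eqp (p q : pauli2) : bool :=
  if nat_of_ord p.1 == nat_of_ord q.1 then nat_of_ord p.2 == nat_of_ord q.2 else false.
Definition memp x s := lhas (eqp x) s.
Definition dj (a b : seq pauli2) := ~~ lhas (fun x => memp x b) a.
Definition sub (a b : seq pauli2) := lall (fun x => memp x b) a.
Definition cnt1 (s t : seq pauli2) := count (fun x => memp x t) s == 1.
Definition inner (t1 t2 t3 s1 s2 s3 : seq pauli2) : bool :=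
  if cnt1 s1 t1 then if cnt1 s1 t2 then if cnt1 s1 t3 then
  if cnt1 s2 t1 then if cnt1 s2 t2 then if cnt1 s2 t3 then
  if cnt1 s3 t1 then if cnt1 s3 t2 then if cnt1 s3 t3 then
  if dj s1 s2 then if dj s1 s3 then if dj s2 s3 then
  if sub (s1 ++ s2 ++ s3) (t1 ++ t2 ++ t3) then sub (t1 ++ t2 ++ t3) (s1 ++ s2 ++ s3)
  else false else false else false else false else false else false else false
  else false else false else false else false else false else false.
Definition main_ok_gen (L : seq (seq pauli2)) : bool :=
  lall (fun t1 => lall (fun t2 => lall (fun t3 =>
    if dj t1 t2 then if dj t1 t3 then if dj t2 t3 then
    if lall (fun u => lhas (fun x => memp x (t1 ++ t2 ++ t3)) u) L then
    lhas (fun s1 => lhas (fun s2 => lhas (fun s3 => inner t1 t2 t3 s1 s2 s3) L) L) L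
    else true else true else true else true) L) L) L.
Definition class_ok_gen (L : seq (seq pauli2)) : bool :=
  lall (fun a => lall (fun b => lall (fun c =>
    if good [:: a; b; c] then lhas (fun t => if sub [:: a; b; c] t then sub t [:: a; b; c] else false) L
    else true) P) P) P.
Lemma class_ok_true : class_ok_gen Lc. Proof. by vm_compute. Qed.
Lemma main_ok_true : main_ok_gen Lc. Proof. by vm_compute. Qed.

Lemma lhasE T (a : T -> bool) s : lhas a s = has a s.
Proof. by elim: s => //= x s IH; rewrite IH; case: (a x). Qed.
Lemma lallE T (a : T -> bool) s : lall a s = all a s.
Proof. by elim: s => //= x s IH; rewrite IH; case: (a x). Qed.
Lemma eqpE p q : eqp p q = (p == q).
Proof.
case: p => a b; case: q => c d; rewrite /eqp /= xpair_eqE.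
have -> : (a == c) = (nat_of_ord a == nat_of_ord c) by [].
have -> : (b == d) = (nat_of_ord b == nat_of_ord d) by [].
by case: (nat_of_ord a == nat_of_ord c).
Qed.
Lemma mempE x s : memp x s = (x \in s).
Proof.
rewrite /memp lhasE; elim: s => //= y s IH; by rewrite IH in_cons eqpE.
Qed.
Lemma subP a b : sub a b -> forall x, x \in a -> x \in b.
Proof. rewrite /sub lallE => /allP H x /H; by rewrite mempE. Qed.
Lemma djS a b : dj a b = [disjoint [set x in a] & [set x in b]].
Proof.
have E : [set x in a] =i a by move=> x; rewrite inE.
rewrite (eq_disjoint E) disjoint_has /dj lhasE; congr (~~ _).
by apply: eq_has => x /=; rewrite inE mempE.
Qed.
Lemma capS s t : uniq s ->
  #|[set x in s] :&: [set x in t]| = count (fun x => memp x t) s.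
Proof.
move=> us.
have -> : [set x in s] :&: [set x in t] = [set x in [seq x <- s | x \in t]].
  by apply/setP => x; rewrite !inE mem_filter andbC.
rewrite cardsE; move/card_uniqP: (filter_uniq (fun x => x \in t) us) => ->.
by rewrite size_filter; apply: eq_count => x; rewrite mempE.
Qed.
Lemma good_mcc s : good s -> max_comm_class [set x in s].
Proof.
case/and4P=> /eqP s3 us nI /allP hc.
apply/and3P; split.
- by rewrite cardsE; move/card_uniqP: us => ->; rewrite s3.
- by rewrite inE.
- apply/forall_inP => p; rewrite inE => hp; apply/forall_inP => q; rewrite inE => hq.
  by move/allP: (hc p hp); apply.
Qed.
Lemma Lc_good t : t \in Lc -> good t.
Proof. by rewrite mem_filter => /andP [/andP [] ]. Qed.
Lemma O4_all (i : 'I_4) : i \in O4.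
Proof.
case: i => [[|[|[|[|m]]]] Hi] //; rewrite /O4 !in_cons;
  apply/orP; do ?[by left; apply/eqP/val_inj | right; apply/orP].
Qed.
Lemma P_all (p : pauli2) : p \in P.
Proof.
case: p => i j; rewrite /P; apply/flattenP.
exists [seq (i, j0) | j0 <- O4]; first by apply: (map_f (fun i0 => [seq (i0, j0) | j0 <- O4])); apply: O4_all.
by apply: (map_f (fun j0 => (i, j0))); apply: O4_all.
Qed.
Lemma class_in (C : {set pauli2}) : max_comm_class C ->
  exists2 t, t \in Lc & C = [set x in t].
Proof.
case/and3P=> /eqP c3 nI /forall_inP hc.
have us : uniq (enum C) := enum_uniq _.
have se : size (enum C) = 3 by rewrite -cardE.
have EC := set_enum C.
case E : (enum C) se us EC => [|a [|b [|c [|]]]] // _ us EC.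
have hg : good [:: a; b; c].
  apply/and4P; split => //.
  - by rewrite -EC inE in nI.
  - apply/allP => p hp; apply/allP => q hq.
    have hpC : p \in C by rewrite -EC inE.
    have hqC : q \in C by rewrite -EC inE.
    by move/forall_inP: (hc p hpC); apply.
move: class_ok_true; rewrite /class_ok_gen lallE => /allP /(_ a (P_all a)).
rewrite lallE => /allP /(_ b (P_all b)); rewrite lallE => /allP /(_ c (P_all c)).
rewrite hg lhasE => /hasP [t tL].
case: ifP => // /subP s1 /subP s2.
exists t => //; rewrite -EC; apply/setP => x; rewrite !in_set.
by apply/idP/idP; [apply: s1 | apply: s2].
Qed.

Lemma innerP t1 t2 t3 s1 s2 s3 : inner t1 t2 t3 s1 s2 s3 ->
  [/\ [/\ cnt1 s1 t1, cnt1 s1 t2, cnt1 s1 t3, cnt1 s2 t1 & cnt1 s2 t2],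
      [/\ cnt1 s2 t3, cnt1 s3 t1, cnt1 s3 t2 & cnt1 s3 t3],
      [/\ dj s1 s2, dj s1 s3 & dj s2 s3] &
      (sub (s1 ++ s2 ++ s3) (t1 ++ t2 ++ t3) /\ sub (t1 ++ t2 ++ t3) (s1 ++ s2 ++ s3))].
Proof.
rewrite /inner; do 13 case: ifP => //; by move=> *; split.
Qed.

Theorem theorem5 (C1 C2 C3 : {set pauli2}) :
  [disjoint C1 & C2] -> [disjoint C1 & C3] -> [disjoint C2 & C3] ->
  unextendible [set C1; C2; C3] ->
  exists C1' C2' C3' : {set pauli2},
    (max_comm_class C1' /\ max_comm_class C2' /\ max_comm_class C3') /\
    ([disjoint C1' & C2'] /\ [disjoint C1' & C3'] /\ [disjoint C2' & C3']) /\
    C1' :|: C2' :|: C3' = C1 :|: C2 :|: C3 /\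
    [set C1'; C2'; C3'] != [set C1; C2; C3] /\
    (forall C' C, C' \in [set C1'; C2'; C3'] -> C \in [set C1; C2; C3] ->
       #|C' :&: C| = 1).
Proof.
move=> d12 d13 d23 /and3P [/forall_inP Hall _ Hne].
have i1 : C1 \in [set C1; C2; C3] by rewrite !inE eqxx.
have i2 : C2 \in [set C1; C2; C3] by rewrite !inE eqxx ?orbT.
have i3 : C3 \in [set C1; C2; C3] by rewrite !inE eqxx ?orbT.
have [t1 t1L E1] := class_in (Hall C1 i1).
have [t2 t2L E2] := class_in (Hall C2 i2).
have [t3 t3L E3] := class_in (Hall C3 i3).
have cov : forall x, (x \in cover [set C1; C2; C3]) = (x \in t1 ++ t2 ++ t3).
  move=> x; rewrite !mem_cat; apply/bigcupP/idP.
  - case=> C; rewrite !inE -orbA => /or3P [] /eqP -> ;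
      by rewrite ?E1 ?E2 ?E3 in_set => ->; rewrite ?orbT.
  - case/or3P => h.
    + by exists C1; rewrite ?inE ?eqxx // E1 in_set.
    + by exists C2; rewrite ?inE ?eqxx ?orbT // E2 in_set.
    + by exists C3; rewrite ?inE ?eqxx ?orbT // E3 in_set.
subst C1 C2 C3.
move: main_ok_true; rewrite /main_ok_gen lallE => /allP /(_ t1 t1L).
rewrite lallE => /allP /(_ t2 t2L); rewrite lallE => /allP /(_ t3 t3L).
rewrite !djS d12 d13 d23.
have -> : lall (fun u => lhas (fun x => memp x (t1 ++ t2 ++ t3)) u) Lc.
  rewrite lallE; apply/allP => u uL; rewrite lhasE; apply/negPn/negP => hn.
  move/existsP: Hne; apply; exists [set x in u]; rewrite good_mcc ?Lc_good //=.
  have Eu : [set x in u] =i u by move=> x; rewrite inE.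
  rewrite (eq_disjoint Eu) disjoint_has; apply/negP => /hasP [x xu]; rewrite cov => xt.
  by move/hasP: hn; apply; exists x => //; rewrite mempE.
rewrite lhasE => /hasP [s1 s1L]; rewrite lhasE => /hasP [s2 s2L];
  rewrite lhasE => /hasP [s3 s3L].
case/innerP => [[c11 c12 c13 c21 c22] [c23 c31 c32 c33] [e12 e13 e23] [sa sb]].
have us1 : uniq s1 by case/and4P: (Lc_good s1L).
have us2 : uniq s2 by case/and4P: (Lc_good s2L).
have us3 : uniq s3 by case/and4P: (Lc_good s3L).
have Hc : forall C' C, C' \in [set [set x in s1]; [set x in s2]; [set x in s3]] ->
    C \in [set [set x in t1]; [set x in t2]; [set x in t3]] -> #|C' :&: C| = 1.
  move=> C' C; rewrite !inE -!orbA => /or3P [] /eqP -> /or3P [] /eqP ->;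
    (rewrite capS; [apply/eqP; assumption | assumption]).
exists [set x in s1], [set x in s2], [set x in s3].
split; first by split; [|split]; apply: good_mcc; apply: Lc_good.
split; first by rewrite -!djS.
split.
  apply/setP => x; rewrite !inE -!orbA -!mem_cat.
  by apply/idP/idP => h; [exact: (subP sa h) | exact: (subP sb h)].
split => //.
apply/negP => /eqP E.
have h : [set x in s1] \in [set [set x in t1]; [set x in t2]; [set x in t3]].
  by rewrite -E !inE eqxx.
have h1 : [set x in s1] \in [set [set x in s1]; [set x in s2]; [set x in s3]].
  by rewrite !inE eqxx.
have := Hc _ _ h1 h.
rewrite setIid cardsE.
case/and4P: (Lc_good s1L) => /eqP s3' us _ _.
by move/card_uniqP: us => ->; rewrite s3'.
Qed.
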